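(* Let $n$ be even, $k\ge 1$ an integer, $d=\gcd(k,n)$, $n=td$, $\lambda\in\mathbb{F}_{2^n}$, and $f(x)=Tr(\lambda x^{2^k+1})$ for $x\in\mathbb{F}_{2^n}$. Then $f$ is bent-negabent if and only if one of the following two equivalent statements holds: (1) $\lambda^{2^{n-k}}x^{2^{n-k}}+\lambda x^{2^k}$ is a complete mapping polynomial over $\mathbb{F}_{2^n}$; (2) $\lambda$ is neither of the form $\frac{v_0^{2^{2k}+1}}{(v_0+v_1)^{2^k+1}}$ with $v_0\in\mathbb{F}_{2^n}\setminus\mathbb{F}_{2^d}$ and $v_1=v_0^{2^k}$, nor of the form $v^{2^k+1}$ with $v\in\mathbb{F}_{2^n}$.
   Context: $Tr=Tr_1^n$ is the absolute trace $\mathbb{F}_{2^n}\to\mathbb{F}_2$. A polynomial $F$ over $\mathbb{F}_{2^n}$ is a complete mapping polynomial if both $F(x)$ and $F(x)+x$ are permutation polynomials of $\mathbb{F}_{2^n}$. Fix a self-dual basis of $\mathbb{F}_{2^n}$ over $\mathbb{F}_2$ (basis $\{\alpha_i\}$ with $Tr(\alpha_i\alpha_j)=\delta_{ij}$), identify $\mathbb{F}_{2^n}$ with $\mathbb{F}_2^n$ via coordinates, and let $wt(x)$ be the number of nonzero coordinates of $x$. For $g:\mathbb{F}_{2^n}\to\mathbb{F}_2$: $g$ is bent if $\left|\sum_x(-1)^{g(x)+Tr(\mu x)}\right|=2^{n/2}$ for all $\mu$; $g$ is negabent if $\left|\sum_x(-1)^{g(x)+Tr(\mu x)}\mathrm{i}^{wt(x)}\right|=2^{n/2}$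 for all $\mu$ ($\mathrm{i}=\sqrt{-1}$); $g$ is bent-negabent if it is both. *)

(* Defs.v *)
From HB Require Import structures.
From mathcomp Require Import all_boot all_order all_algebra all_field.
Set Implicit Arguments. Unset Strict Implicit. Unset Printing Implicit Defensive.
Import Order.TTheory GRing.Theory Num.Theory.
Local Open Scope ring_scope.

Section Defs.
Variables (F : finFieldType) (n : nat).

Definition Tr (x : F) : F := \sum_(i < n) x ^+ (2 ^ i).

(* Tr x as an element of F_2 = bool (Tr x is 0 or 1) *)
Definition trb (x : F) : bool := Tr x != 0.

Definition self_dual (alpha : 'I_n -> F) : Prop :=
  forall i j : 'I_n, Tr (alpha i * alpha j) = (i == j)%:R.

Definition coords (alpha : 'I_n -> F) (x : F) : option {ffun 'I_n -> bool} :=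
  [pick c : {ffun 'I_n -> bool} | x == \sum_(i < n) (c i)%:R * alpha i].

Definition wt (alpha : 'I_n -> F) (x : F) : nat :=
  if coords alpha x is Some c then #|[set i | c i]| else 0%N.

Definition sgn (b : bool) : algC := (-1) ^+ b.

Definition bent (g : F -> bool) : Prop :=
  forall mu : F, `| \sum_(x : F) sgn (g x (+) trb (mu * x)) | = (2 ^ n./2)%:R.

Definition negabent (alpha : 'I_n -> F) (g : F -> bool) : Prop :=
  forall mu : F,
    `| \sum_(x : F) sgn (g x (+) trb (mu * x)) * 'i ^+ (wt alpha x) | = (2 ^ n./2)%:R.

Definition bent_negabent (alpha : 'I_n -> F) (g : F -> bool) : Prop :=
  bent g /\ negabent alpha g.
End Defs.

Definition perm_poly (F : finFieldType) (p : {poly F}) : Prop :=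
  bijective (fun x : F => p.[x]).

Definition complete_mapping (F : finFieldType) (p : {poly F}) : Prop :=
  perm_poly p /\ perm_poly (p + 'X).

(* Main.v *)
Require Import Defs.
From HB Require Import structures.
From mathcomp Require Import all_boot all_order all_algebra all_field.
From mathcomp Require Import ring.
Set Implicit Arguments. Unset Strict Implicit. Unset Printing Implicit Defensive.
Import Order.TTheory GRing.Theory Num.Theory.
Local Open Scope ring_scope.

Section S.
Variables (F : finFieldType) (n : nat).
Hypothesis HF : #|F| = (2 ^ n)%N.

Lemma n_gt0 : (0 < n)%N.
Proof. have := finNzRing_gt1 F; rewrite HF; case: n => //. Qed.

Lemma ch2 : 2 \in [pchar F].
Proof. exact: (card_finPcharP HF). Qed.

Lemma two0 : 2%:R = 0 :> F.
Proof. exact: pcharf0 ch2. Qed.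

Lemma addxx (x : F) : x + x = 0.
Proof. by rewrite (addrr_pchar2 ch2). Qed.

Definition fr (m : nat) (x : F) := x ^+ (2 ^ m).

Lemma frS m x : fr m.+1 x = fr m x ^+ 2.
Proof. by rewrite /fr expnSr exprM. Qed.

Lemma fr_add m x y : fr m (x + y) = fr m x + fr m y.
Proof.
elim: m => [|m IH]; first by rewrite /fr !expr1.
by rewrite !frS IH sqrrD mulr2n addxx addr0.
Qed.

Lemma fr_mul m x y : fr m (x * y) = fr m x * fr m y.
Proof. by rewrite /fr exprMn. Qed.

Lemma fr_inv m x : fr m (x^-1) = (fr m x)^-1.
Proof. by rewrite /fr exprVn. Qed.

Lemma fr0 m : fr m 0 = 0.
Proof. by rewrite /fr expr0n expn_eq0. Qed.

Lemma fr1 m : fr m 1 = 1.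
Proof. by rewrite /fr expr1n. Qed.

Lemma frD a b x : fr (a + b) x = fr a (fr b x).
Proof. by rewrite /fr expnD mulnC exprM. Qed.

Lemma fr_n x : fr n x = x.
Proof. by rewrite /fr -HF expf_card. Qed.

Lemma fr_mult c x : fr (c * n) x = x.
Proof. elim: c => [|c IH]; first by rewrite /fr expr1. by rewrite mulSn frD fr_n. Qed.

Lemma fr_mod m x : fr m x = fr (m %% n) x.
Proof. by rewrite {1}(divn_eq m n) addnC frD fr_mult. Qed.

Lemma frC a b x : fr a (fr b x) = fr b (fr a x).
Proof. by rewrite -!frD addnC. Qed.

Lemma fr_inv_l m x : fr (n - m %% n) (fr m x) = x.
Proof.
rewrite [fr m x]fr_mod -frD subnK ?fr_n //.
by apply: ltnW; rewrite ltn_mod n_gt0.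
Qed.

Lemma fr_inv_r m x : fr m (fr (n - m %% n) x) = x.
Proof. by rewrite frC fr_inv_l. Qed.

Lemma fr_inj m : injective (fr m).
Proof. by move=> x y /(congr1 (fr (n - m %% n))); rewrite !fr_inv_l. Qed.

Lemma fr_eq0 m x : (fr m x == 0) = (x == 0).
Proof. apply/eqP/eqP => [h|->]; last by rewrite fr0. by apply: (@fr_inj m); rewrite h fr0. Qed.

Lemma TrE (x : F) : Tr n x = \sum_(i < n) fr i x.
Proof. by []. Qed.

Lemma Tr_add (x y : F) : Tr n (x + y) = Tr n x + Tr n y.
Proof. by rewrite !TrE -big_split; apply: eq_bigr => i _; rewrite fr_add. Qed.

Lemma Tr_fr1 (x : F) : Tr n (fr 1 x) = Tr n x.
Proof.
rewrite !TrE; under eq_bigr do rewrite -frD addn1.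
have [m hm] : exists m, n = m.+1 by have := n_gt0; case: n => // m; exists m.
move: (fr_n x); rewrite hm => hx.
rewrite big_ord_recr big_ord_recl /= hx /fr expn0 expr1 addrC.
by congr (_ + _); apply: eq_bigr => i _.
Qed.

Lemma Tr_fr m (x : F) : Tr n (fr m x) = Tr n x.
Proof. elim: m => [|m IH]; first by rewrite /fr expr1. by rewrite -add1n frD Tr_fr1 IH. Qed.

Lemma fr_sum m (I : finType) (G : I -> F) : fr m (\sum_i G i) = \sum_i fr m (G i).
Proof. exact: (big_morph (fr m) (fr_add m) (fr0 m)). Qed.

Lemma fr_Tr m (x : F) : fr m (Tr n x) = Tr n x.
Proof.
rewrite TrE fr_sum -[RHS](Tr_fr m) TrE.
by apply: eq_bigr => i _; rewrite frC.
Qed.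

Lemma Tr01 (x : F) : Tr n x = 0 \/ Tr n x = 1.
Proof.
have h : Tr n x * (Tr n x - 1) = 0.
  by rewrite mulrBr mulr1 -expr2 -[_ ^+ 2]/(fr 1 (Tr n x)) fr_Tr subrr.
move/eqP: h; rewrite mulf_eq0 subr_eq0 => /orP[] /eqP; tauto.
Qed.

Lemma trb_add (x y : F) : trb n (x + y) = trb n x (+) trb n y.
Proof.
rewrite /trb Tr_add.
have o : (1 : F) != 0 := oner_neq0 F.
case: (Tr01 x) => ->; case: (Tr01 y) => ->;
  rewrite ?addr0 ?add0r ?eqxx ?o //=.
by rewrite addxx eqxx.
Qed.

Lemma trb0 : trb n (0 : F) = false.
Proof. by rewrite /trb TrE big1 ?eqxx // => i _; rewrite fr0. Qed.

Lemma trb_fr m (x : F) : trb n (fr m x) = trb n x.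
Proof. by rewrite /trb Tr_fr. Qed.

Lemma Tr_nat (x : F) : Tr n x = (trb n x)%:R.
Proof. by rewrite /trb; case: (Tr01 x) => ->; rewrite ?eqxx ?oner_eq0. Qed.
Lemma size_trpoly m : size (\sum_(i < m.+1) 'X^(2 ^ i) : {poly F}) = (2 ^ m).+1.
Proof.
elim: m => [|m IH]; first by rewrite big_ord1 expn0 size_polyXn.
rewrite big_ord_recr /= addrC size_polyDl size_polyXn // IH ltnS ltn_exp2l.
all: by [].
Qed.

Lemma Tr_exists : exists y : F, trb n y.
Proof.
apply/existsP; apply: contraT; rewrite negb_exists => /forallP h.
have [m hm] : exists m, n = m.+1 by have := n_gt0; case: n => // m; exists m.
pose p : {poly F} := \sum_(i < n) 'X^(2 ^ i).
have sp : size p = (2 ^ m).+1 by rewrite /p hm size_trpoly.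
have p0 : p != 0 by rewrite -size_poly_eq0 sp.
have hall : all (root p) (enum F).
  apply/allP => y _; rewrite /root /p horner_sum.
  have := h y; rewrite /trb negbK => /eqP h0.
  by apply/eqP; rewrite -[RHS]h0 TrE; apply: eq_bigr => i _; rewrite hornerXn.
have := max_poly_roots p0 hall (enum_uniq F).
rewrite -cardE HF sp hm ltnS leqNgt ltn_exp2l //.
by rewrite ltnSn.
Qed.
Lemma sgn_add b e : sgn (b (+) e) = sgn b * sgn e.
Proof. exact: signr_addb. Qed.

Lemma sgn_sq b : sgn b * sgn b = 1.
Proof. by case: b; rewrite /sgn ?expr0 ?expr1 ?mulr1 // mulrNN mulr1. Qed.

Lemma sgn_conj b : (sgn b)^* = sgn b.
Proof. by case: b; rewrite /sgn ?expr0 ?expr1 ?rmorph1 ?rmorphN1. Qed.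

Lemma sgn_neq0 b : sgn b != 0.
Proof. by rewrite /sgn signr_eq0. Qed.

Lemma char_sum (c : F) :
  \sum_(x : F) sgn (trb n (x * c)) = if c == 0 then (2 ^ n)%:R else 0.
Proof.
have [->|c0] := eqVneq c 0.
  rewrite (eq_bigr (fun=> 1)); last by move=> x _; rewrite mulr0 trb0.
  by rewrite sumr_const cardT -cardE HF.
have [y hy] := Tr_exists.
set S := (X in X = _).
have hS : S = - S.
  rewrite {1}/S (reindex_inj (addrI (y / c))) /= /S -sumrN.
  apply: eq_bigr => x _; rewrite mulrDl divfK // trb_add hy sgn_add /sgn expr1.
  by rewrite mulN1r.
move/eqP: hS; rewrite -subr_eq0 opprK -mulr2n -mulr_natr mulf_eq0 pnatr_eq0 /=.
by rewrite orbF => /eqP.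
Qed.
Lemma conjM' (a b : algC) : (a * b)^* = a^* * b^*.
Proof. exact: rmorphM. Qed.

Lemma conj_sum' (G : F -> algC) : (\sum_x G x)^* = \sum_x (G x)^*.
Proof. exact: rmorph_sum. Qed.

Lemma walsh_sq (s c : F -> algC) (L : F -> F) :
  (forall x a, s x * (s (x + a))^* = c a * sgn (trb n (x * L a))) ->
  forall mu, `|\sum_x s x * sgn (trb n (mu * x))| ^+ 2 =
    (2 ^ n)%:R * \sum_a ((L a == 0)%:R * c a * sgn (trb n (mu * a))).
Proof.
move=> hs mu; rewrite normCK conj_sum' mulr_suml.
rewrite (eq_bigr (fun x => \sum_a c a * sgn (trb n (mu * a)) * sgn (trb n (x * L a)))); last first.
  move=> x _; rewrite mulr_sumr (reindex_inj (addrI x)) /=.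
  apply: eq_bigr => a _; rewrite conjM' sgn_conj mulrACA hs mulrDr trb_add sgn_add.
  by rewrite [sgn _ * (_ * _)]mulrA sgn_sq mul1r mulrAC.
rewrite exchange_big mulr_sumr; apply: eq_bigr => a _.
rewrite -mulr_sumr char_sum.
by case: eqP => _; rewrite ?mul1r ?mul0r ?mulr0 // mulrC.
Qed.
Lemma norm_half (z : algC) : ~~ odd n ->
  (`|z| = (2 ^ n./2)%:R) <-> (`|z| ^+ 2 = (2 ^ n)%:R).
Proof.
move=> ev.
have e : (2 ^ n)%:R = ((2 ^ n./2)%:R : algC) ^+ 2.
  by rewrite -natrX -expnM muln2 even_halfK.
rewrite e; split=> [->//|h]; apply/eqP.
by rewrite -(@eqrXn2 _ 2) ?h ?normr_ge0 ?ler0n.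
Qed.

Lemma walsh_crit (s c : F -> algC) (L : F -> F) :
  (forall x a, s x * (s (x + a))^* = c a * sgn (trb n (x * L a))) ->
  c 0 = 1 -> (forall a, c a != 0) -> L 0 = 0 -> ~~ odd n ->
  (forall mu, `|\sum_x s x * sgn (trb n (mu * x))| = (2 ^ n./2)%:R) <->
  (forall a, L a = 0 -> a = 0).
Proof.
move=> hs c0 cn0 L0 ev.
have N0 : (2 ^ n)%:R != 0 :> algC by rewrite pnatr_eq0 expn_eq0.
split=> [hW b Lb|hL mu]; last first.
  apply/(norm_half _ ev); rewrite (walsh_sq hs) (bigD1 0) //= big1 ?addr0.
    by rewrite L0 eqxx c0 mulr0 trb0 /sgn !mul1r expr0 mulr1.
  move=> a a0; rewrite (_ : (L a == 0) = false) ?mul0r //.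
  by apply/negbTE; apply: contra a0 => /eqP/hL->.
apply/eqP/negPn/negP => b0.
have hT : forall mu, \sum_a ((L a == 0)%:R * c a * sgn (trb n (mu * a))) = 1.
  move=> mu; have := hW mu; move/(norm_half _ ev); rewrite (walsh_sq hs) => h.
  by apply: (mulfI N0); rewrite h mulr1.
pose t a := (L a == 0)%:R * c a.
pose G mu := (\sum_a t a * sgn (trb n (mu * a))) * sgn (trb n (mu * b)).
have E1 : \sum_mu G mu = 0.
  rewrite (eq_bigr (fun mu => sgn (trb n (mu * b)))); last by move=> mu _; rewrite /G hT mul1r.
  by rewrite char_sum (negbTE b0).
have E2 : \sum_mu G mu = t b * (2 ^ n)%:R.
  rewrite (eq_bigr (fun mu => \sum_a t a * sgn (trb n (mu * (a + b))))); last first.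
    move=> mu _; rewrite /G mulr_suml; apply: eq_bigr => a _.
    by rewrite mulrDr trb_add sgn_add mulrA.
  rewrite exchange_big (bigD1 b) //= [X in _ + X]big1 ?addr0.
    by rewrite -mulr_sumr char_sum addxx eqxx.
  move=> a ab; rewrite -mulr_sumr char_sum.
  case: eqP => [h|_]; last by rewrite mulr0.
  by move: ab; rewrite -(subr0 a) -h opprD addrA subrr add0r (oppr_pchar2 ch2) eqxx.
move: E2; rewrite E1 /t Lb eqxx mul1r => /esym/eqP; rewrite mulf_eq0 (negbTE N0) orbF.
by rewrite (negbTE (cn0 b)).
Qed.
Lemma Tr0 : Tr n (0 : F) = 0.
Proof. by rewrite TrE big1 // => i _; rewrite fr0. Qed.

Lemma Tr_sum (I : finType) (G : I -> F) : Tr n (\sum_i G i) = \sum_i Tr n (G i).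
Proof. exact: (big_morph _ Tr_add Tr0). Qed.

Lemma Tr_natM (b : bool) (z : F) : Tr n (b%:R * z) = b%:R * Tr n z.
Proof. by case: b; rewrite ?mul1r ?mul0r ?Tr0. Qed.

Lemma nat_xor (u v : bool) : (u (+) v)%:R = u%:R + v%:R :> F.
Proof. by case: u; case: v; rewrite ?addr0 ?add0r //= addxx. Qed.

Lemma nat_bigxor (I : finType) (b : I -> bool) :
  (\big[addb/false]_i b i)%:R = \sum_i (b i)%:R :> F.
Proof. exact: (big_morph (fun u : bool => u%:R : F) nat_xor). Qed.

Lemma sgn_bigxor (I : finType) (b : I -> bool) :
  sgn (\big[addb/false]_i b i) = \prod_i sgn (b i).
Proof. by apply: (big_morph sgn sgn_add); rewrite /sgn expr0. Qed.

Lemma trb_natE (b : bool) : (b%:R != 0 :> F) = b.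
Proof. by case: b; rewrite ?eqxx ?oner_eq0. Qed.

Variable alpha : 'I_n -> F.
Hypothesis Hsd : self_dual alpha.

Definition cf (x : F) (i : 'I_n) := trb n (alpha i * x).
Definition phi (c : {ffun 'I_n -> bool}) : F := \sum_i (c i)%:R * alpha i.

Lemma cf_phi c j : cf (phi c) j = c j.
Proof.
rewrite /cf /trb mulr_sumr Tr_sum.
rewrite (eq_bigr (fun i => (c i)%:R * (i == j)%:R)); last first.
  by move=> i _; rewrite mulrCA Tr_natM Hsd eq_sym.
rewrite (bigD1 j) //= big1 ?addr0 ?eqxx ?mulr1 ?trb_natE //.
by move=> i /negbTE ->; rewrite mulr0.
Qed.

Lemma phi_inj : injective phi.
Proof. by move=> c c' h; apply/ffunP => j; rewrite -cf_phi h cf_phi. Qed.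

Lemma phi_onto x : x = phi [ffun i => cf x i].
Proof.
have : x \in codom phi.
  by apply: (inj_card_onto phi_inj); rewrite card_ffun card_bool card_ord HF.
case/codomP => c ->; congr phi; apply/ffunP => j; by rewrite ffunE cf_phi.
Qed.

Lemma wtE x : wt alpha x = #|[set i | cf x i]|.
Proof.
rewrite /wt /coords; case: pickP => [c /eqP hc | none].
  by apply: eq_card => i; rewrite !inE hc cf_phi.
by have := none [ffun i => cf x i]; rewrite -/(phi _) -phi_onto eqxx.
Qed.

Lemma cf_add x a i : cf (x + a) i = cf x i (+) cf a i.
Proof. by rewrite /cf mulrDr trb_add. Qed.

Lemma cf0 i : cf 0 i = false.
Proof. by rewrite /cf mulr0 trb0. Qed.

Lemma trb_mul_cf x a : trb n (x * a) = \big[addb/false]_i (cf x i && cf a i).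
Proof.
set B := \big[addb/false]_i _.
have -> : B = (B%:R != 0 :> F) by rewrite trb_natE.
rewrite /B nat_bigxor /trb; congr (_ != 0); rewrite {1}(phi_onto x) /phi mulr_suml Tr_sum.
apply: eq_bigr => i _; rewrite ffunE -mulrA Tr_natM mulrC Tr_nat.
by case: (cf x i); rewrite ?mulr1 ?mulr0.
Qed.
Lemma pow_card (z : algC) (b : 'I_n -> bool) :
  z ^+ #|[set i | b i]| = \prod_i (if b i then z else 1).
Proof.
rewrite -prodr_const big_mkcond /=; apply: eq_bigr => i _; by rewrite inE.
Qed.

Lemma conj_prod' (G : 'I_n -> algC) : (\prod_i G i)^* = \prod_i (G i)^*.
Proof. exact: rmorph_prod. Qed.

Lemma wt_key x a :
  'i ^+ wt alpha x * ('i ^+ wt alpha (x + a))^* =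
  (-'i) ^+ wt alpha a * sgn (trb n (x * a)) :> algC.
Proof.
rewrite !wtE !pow_card conj_prod' -big_split trb_mul_cf sgn_bigxor -big_split.
apply: eq_bigr => i _; rewrite cf_add.
case: (cf x i); case: (cf a i); rewrite /sgn /= ?expr0 ?expr1 ?mulr1 ?mul1r ?rmorph1 //.
all: rewrite ?mulrN1 ?opprK ?conjCi ?mulrN ?mulNr ?mulr1 ?mul1r ?opprK //.
all: by rewrite mulCii opprK.
Qed.
Variables (k : nat) (lambda : F).

Definition g (x : F) := trb n (lambda * x ^+ (2 ^ k + 1)).
Definition Pf (a : F) := fr (n - k %% n) (lambda * a) + lambda * fr k a.

Lemma Pf_add x y : Pf (x + y) = Pf x + Pf y.
Proof. rewrite /Pf mulrDr !fr_add mulrDr; ring. Qed.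

Lemma Pf0 : Pf 0 = 0.
Proof. by rewrite /Pf mulr0 !fr0 mulr0 addr0. Qed.

Lemma g0 : g 0 = false.
Proof. by rewrite /g expr0n addn1 /= mulr0 trb0. Qed.

Lemma expq1 x : x ^+ (2 ^ k + 1) = fr k x * x.
Proof. by rewrite addn1 exprS mulrC. Qed.

Lemma g_add x a : g (x + a) = g x (+) g a (+) trb n (x * Pf a).
Proof.
rewrite /g !expq1 fr_add.
have -> : lambda * ((fr k x + fr k a) * (x + a)) =
  lambda * (fr k x * x) + lambda * (fr k a * a) + (lambda * a) * fr k x + x * (lambda * fr k a) by ring.
rewrite !trb_add /Pf mulrDr trb_add.
rewrite -(trb_fr (n - k %% n) (lambda * a * fr k x)) fr_mul fr_inv_l (mulrC (fr _ (lambda * a)) x).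
by rewrite !addbA.
Qed.

Lemma bent_hyp x a : sgn (g x) * (sgn (g (x + a)))^* = sgn (g a) * sgn (trb n (x * Pf a)).
Proof. by rewrite sgn_conj g_add !sgn_add !mulrA sgn_sq mul1r. Qed.

Lemma nega_hyp x a :
  (sgn (g x) * 'i ^+ wt alpha x) * (sgn (g (x + a)) * 'i ^+ wt alpha (x + a))^* =
  (sgn (g a) * (-'i) ^+ wt alpha a) * sgn (trb n (x * (Pf a + a))).
Proof.
by rewrite conjM' mulrACA bent_hyp wt_key [x * (Pf a + a)]mulrDr trb_add sgn_add mulrACA.
Qed.

Lemma wt0 : wt alpha 0 = 0%N.
Proof. by rewrite wtE (eq_card (B := pred0)) ?card0 // => i; rewrite inE cf0. Qed.

Lemma inj_ker (L : F -> F) : (forall x y, L (x + y) = L x + L y) ->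
  injective L <-> (forall a, L a = 0 -> a = 0).
Proof.
move=> La; have L0 : L 0 = 0 by apply: (addrI (L 0)); rewrite -La !addr0.
split=> [Li a h|h x y e]; first by apply: Li; rewrite h L0.
have : L (x + y) = 0 by rewrite La e addxx.
move/h/eqP; rewrite addr_eq0 (oppr_pchar2 ch2) => /eqP //.
Qed.
Lemma partA : ~~ odd n ->
  (bent_negabent alpha g <-> (injective Pf /\ injective (fun a => Pf a + a))).
Proof.
move=> ev.
have e1 : bent n g <-> injective Pf.
  rewrite (inj_ker Pf_add) -(walsh_crit bent_hyp) ?g0 // ?Pf0 //; last by move=> a; exact: sgn_neq0.
  by split=> h mu; rewrite -(h mu); congr `|_|; apply: eq_bigr => x _; rewrite sgn_add.
have e2 : negabent alpha g <-> injective (fun a => Pf a + a).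
  rewrite (inj_ker (L := fun a => Pf a + a)); last by move=> x y; rewrite Pf_add; ring.
  rewrite -(walsh_crit nega_hyp) ?g0 ?wt0 ?Pf0 ?addr0 ?mulr1 //; last first.
    by move=> a; rewrite mulf_neq0 ?sgn_neq0 // expf_neq0 // oppr_eq0 neq0Ci.
  by split=> h mu; rewrite -(h mu); congr `|_|; apply: eq_bigr => x _; rewrite sgn_add [LHS]mulrAC.
rewrite /bent_negabent; split.
- by case=> h1 h2; split; [exact: (proj1 e1 h1) | exact: (proj1 e2 h2)].
- by case=> h1 h2; split; [exact: (proj2 e1 h1) | exact: (proj2 e2 h2)].
Qed.
Lemma add_eq0 (x y : F) : x + y = 0 -> x = y.
Proof. by move/eqP; rewrite addr_eq0 (oppr_pchar2 ch2) => /eqP. Qed.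

Lemma sqrt_fr (y : F) : fr 1 (fr n.-1 y) = y.
Proof. by rewrite -frD add1n prednK ?n_gt0 // fr_n. Qed.

Lemma fr1E (y : F) : fr 1 y = y * y.
Proof. by rewrite /fr expn1 expr2. Qed.

Lemma B1 : injective Pf <-> ~ (exists v, lambda = v ^+ (2 ^ k + 1)).
Proof.
rewrite (inj_ker Pf_add); split.
  move=> h [v hv]; have [v0|vn0] := eqVneq v 0.
    have : Pf 1 = 0 by rewrite /Pf hv v0 addn1 exprS !mul0r fr0 addr0.
    by move/h/eqP; rewrite oner_eq0.
  have : Pf v^-1 = 0.
    rewrite /Pf hv expq1 mulfK // fr_inv_l fr_inv mulrAC mulfV ?fr_eq0 // mul1r.
    exact: addxx.
  by move/h/eqP; rewrite invr_eq0 (negbTE vn0).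
move=> nB a Pa; apply/eqP/negPn/negP => a0; apply: nB.
have h1 : fr k (fr (n - k %% n) (lambda * a)) = fr k (lambda * fr k a).
  by rewrite (add_eq0 Pa).
rewrite fr_inv_r fr_mul in h1.
pose c := lambda * a * fr k a.
have sc : fr k c = c by rewrite /c !fr_mul mulrAC -h1.
pose w := fr n.-1 c.
have sw : fr k w = w by rewrite /w frC sc.
have wq : w ^+ (2 ^ k + 1) = c by rewrite expq1 sw -fr1E sqrt_fr.
exists (w / a); rewrite exprMn wq exprVn expq1 /c invfM.
have sa : fr k a != 0 by rewrite fr_eq0.
by field; rewrite a0 sa.
Qed.
Lemma fr_multk m j (y : F) : fr j y = y -> fr (m * j) y = y.
Proof. move=> h; elim: m => [|m IH]; first by rewrite mul0n /fr expr1. by rewrite mulSn frD IH h. Qed.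

Lemma fixed_gcd (y : F) : (0 < k)%N -> (fr k y = y <-> fr (gcdn k n) y = y).
Proof.
move=> k0; split=> h.
  have [a _ /dvdnP [c hc]] := Bezoutl n k0.
  by have := fr_multk c h; rewrite -hc frD fr_mult.
have /dvdnP [m ->] := dvdn_gcdl k n.
exact: fr_multk.
Qed.

Lemma B2 : (0 < k)%N -> injective (fun a => Pf a + a) <->
  ~ (exists v0 : F, v0 ^+ (2 ^ gcdn k n) != v0 /\
       lambda = v0 ^+ (2 ^ (2 * k) + 1) / (v0 + v0 ^+ (2 ^ k)) ^+ (2 ^ k + 1)).
Proof.
move=> k0.
have hl : forall v0 : F, v0 ^+ (2 ^ (2 * k) + 1) / (v0 + v0 ^+ (2 ^ k)) ^+ (2 ^ k + 1)
   = fr k (fr k v0) * v0 / ((fr k v0 + fr k (fr k v0)) * (v0 + fr k v0)).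
  move=> v0; have -> : v0 ^+ (2 ^ (2 * k) + 1) = fr k (fr k v0) * v0.
    by rewrite -frD /fr addnn -mul2n addn1 exprS mulrC.
  by rewrite -/(fr k v0) expq1 fr_add mulrC.
rewrite (inj_ker (L := fun a => Pf a + a)); last by move=> x y; rewrite Pf_add; ring.
split.
  move=> h [v0 [hd hv]]; rewrite hl in hv.
  have hk : fr k v0 != v0 by apply/negP => /eqP /(fixed_gcd v0 k0); apply/eqP.
  have v00 : v0 != 0 by apply: contra hd => /eqP ->; rewrite expr0n expn_eq0.
  have [w ev] : exists w, v0 = w^-1 by exists v0^-1; rewrite invrK.
  rewrite ev in hv hk v00; rewrite invr_eq0 in v00.
  rewrite !fr_inv in hv hk.
  have hw : fr k w != w by apply: contra hk => /eqP ->.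
  set x := w + fr k w.
  have x0 : x != 0 by apply: contra hw => /eqP /add_eq0 <-.
  suff : Pf x + x = 0 by move/h/eqP; rewrite (negbTE x0).
  apply/eqP; rewrite -(fr_eq0 k); apply/eqP.
  rewrite /Pf !fr_add fr_inv_r !fr_mul hv /x !(fr_mul, fr_inv, fr_add).
  set w1 := fr k w; set w2 := fr k w1; set w3 := fr k w2.
  have d01 : w + w1 != 0 by apply/negP => /eqP /add_eq0 e; move/eqP: hw; apply; rewrite -/w1 -e.
  have d12 : w1 + w2 != 0 by rewrite /w2 -fr_add fr_eq0.
  have d23 : w2 + w3 != 0 by rewrite /w3 -fr_add fr_eq0.
  have n1 : w1 != 0 by rewrite fr_eq0.
  have n2 : w2 != 0 by rewrite fr_eq0.
  have n3 : w3 != 0 by rewrite fr_eq0.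
  have ia : forall a b : F, a != 0 -> b != 0 -> a^-1 + b^-1 = (a + b) / (a * b).
    by move=> a b a0 b0; field; rewrite a0 b0.
  rewrite !ia //.
  rewrite (_ : _ + _ = 2%:R * ((w1 ^+ 2 + w1 * w2 + w2 ^+ 2) / (w1 + w2))).
    by rewrite two0 mul0r.
  by field; rewrite d12 n2 n1 n3 d23 v00 d01.
move=> nA x hx; apply/eqP/negPn/negP => x0; apply: nA.
have hPx := add_eq0 hx.
pose c := lambda * x * fr k x.
pose s := fr n.-1 c.
pose w := fr (n - k %% n) s.
have sw : fr k w = s by rewrite /w fr_inv_r.
have hwx : w + fr k w = x.
  apply: (@fr_inj 1); rewrite fr_add sw sqrt_fr /w frC sqrt_fr /c !fr_mul fr_inv_l.
  rewrite fr1E -[X in _ = _ * X]hPx /Pf fr_mul; ring.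
have w0 : w != 0.
  by apply: contra x0 => /eqP w0; rewrite -hwx w0 fr0 addr0.
have hw : fr k w != w.
  by apply: contra x0 => /eqP e; rewrite -hwx e addxx.
exists w^-1; split.
  rewrite -/(fr _ _); apply/negP => /eqP /(fixed_gcd _ k0).
  by rewrite fr_inv => /invr_inj /eqP; apply/negP.
rewrite hl !fr_inv.
set w1 := fr k w; set w2 := fr k w1.
have n1 : w1 != 0 by rewrite fr_eq0.
have n2 : w2 != 0 by rewrite fr_eq0.
have d01 : w + w1 != 0 by rewrite hwx.
have d12 : w1 + w2 != 0 by rewrite /w2 -fr_add hwx fr_eq0.
have ia : forall a b : F, a != 0 -> b != 0 -> a^-1 + b^-1 = (a + b) / (a * b).
  by move=> a b a0 b0; field; rewrite a0 b0.
have hl2 : lambda = w1 * w1 / ((w + w1) * (w1 + w2)).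
  have e : w1 * w1 = c by rewrite -fr1E /w1 sw sqrt_fr.
  rewrite e /c /w2 -fr_add hwx; field.
  by rewrite x0 fr_eq0 x0.
rewrite !ia // hl2; field.
by rewrite d12 n2 n1 w0 d01.
Qed.
End S.

Unset Implicit Arguments.
Set Strict Implicit.

Theorem theorem3 (F : finFieldType) (n k : nat) (lambda : F)
  (alpha : 'I_n -> F) :
  #|F| = (2 ^ n)%N -> ~~ odd n -> (1 <= k)%N -> self_dual alpha ->
  let d := gcdn k n in
  let f := fun x : F => trb n (lambda * x ^+ (2 ^ k + 1)) in
  let P : {poly F} :=
    (lambda ^+ (2 ^ (n - k %% n)))%:P * 'X^(2 ^ (n - k %% n))
    + lambda%:P * 'X^(2 ^ k) in
  let cond1 := complete_mapping P in
  let cond2 :=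
    ~ (exists v0 : F, v0 ^+ (2 ^ d) != v0 /\
         lambda = v0 ^+ (2 ^ (2 * k) + 1) / (v0 + v0 ^+ (2 ^ k)) ^+ (2 ^ k + 1))
    /\ ~ (exists v : F, lambda = v ^+ (2 ^ k + 1)) in
  (bent_negabent alpha f <-> cond1) /\ (cond1 <-> cond2).
Proof.
move=> HF ev k1 Hsd d f P cond1 cond2.
have hP : forall x, P.[x] = Pf n k lambda x.
  by move=> x; rewrite /P /Pf /fr hornerD !hornerCM !hornerXn exprMn.
have hPX : forall x, (P + 'X).[x] = Pf n k lambda x + x.
  by move=> x; rewrite hornerD hornerX hP.
have bij_inj_iff : forall (G H : F -> F), (forall x, G x = H x) ->
    (bijective G <-> injective H).
  move=> G H e; split=> [/bij_inj iG x y|iH].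
    by rewrite -!e => /iG.
  by apply: injF_bij => x y; rewrite !e => /iH.
have c1 : cond1 <-> injective (Pf n k lambda) /\ injective (fun a => Pf n k lambda a + a).
  rewrite /cond1 /complete_mapping /perm_poly.
  have e1 := bij_inj_iff _ _ hP; have e2 := bij_inj_iff _ _ hPX.
  split=> [[h1 h2]|[h1 h2]]; split.
  - exact: (proj1 e1 h1).
  - exact: (proj1 e2 h2).
  - exact: (proj2 e1 h1).
  - exact: (proj2 e2 h2).
have A := partA HF Hsd k lambda ev.
have e1 := B1 HF k lambda.
have e2 := B2 HF lambda k1.
split.
  split=> [h|h]; [apply/c1; apply/A; exact h | apply/A; apply/c1; exact h].
split=> [h|h].
  have [h1 h2] := proj1 c1 h.
  by split; [exact: (proj1 e2 h2) | exact: (proj1 e1 h1)].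
case: h => h2 h1; apply/c1; split; [exact: (proj2 e1 h1) | exact: (proj2 e2 h2)].
Qed.
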